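(* Let $x\in X$, $n\in \mathbb{Z}^k$ and $a\in \mathbb{R}^k$. (1) If $\phi(T^nx)>0$, then $B_{M/2}(n,1/\phi(T^nx))\subset V(x,n)$, where $B_{M/2}(\cdot)$ denotes the closed Euclidean ball of radius $M/2$ in $\mathbb{R}^{k+1}$. (2) If $W(x,n)$ is non-empty, then $1\leq 1/\phi(T^nx)\leq 2$. (3) If $(a,-H)\in V(x,n)$, i.e. $a\in W(x,n)$, then $|a-n|<L+\sqrt{k}$. (4) Let $s>1$ and $r>0$. One can choose $M$ sufficiently large depending on $s,r$ (and then choose the integer $L\geq M$, the function $\phi$ and the number $H\geq (L+\sqrt{k})^2$ for this $M$ as in the setting described in the context) so that, for all $x\in X$, $n\in\mathbb{Z}^k$, $a\in\mathbb{R}^k$: if $(a,-sH)\in V(x,n)$ then $B_r(a/s+(1-1/s)n)\subset W(x,n)$.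
   Context: Let $(X,\mathbb{Z}^k,T)$ be a dynamical system ($X$ a compact metric space with a continuous $\mathbb{Z}^k$-action) having the marker property: for every finite $F\subset\mathbb{Z}^k$ there is an open $U\subset X$ with $X=\bigcup_{n\in\mathbb{Z}^k}T^nU$ and $U\cap T^nU=\emptyset$ for all nonzero $n\in F$. Let $M$ be a positive integer. Fix an integer $L\geq M$ and a continuous function $\phi:X\to[0,1]$ such that: (i) if $\phi(x)>0$ then $\phi(T^nx)=0$ for all nonzero $n\in\mathbb{Z}^k$ with $|n|<M$; (ii) for every $x\in X$ there is $n\in\mathbb{Z}^k$ with $|n|<L$ and $\phi(T^nx)=1$ (such $L,\phi$ exist by the marker property). For $x\in X$ and $n\in\mathbb{Z}^k$ with $\phi(T^nx)\neq 0$, let $V(x,n)\subset\mathbb{R}^{k+1}$ be the Voronoi cell of the center $(n,1/\phi(T^nx))$ with respect to the set of centers $\{(m,1/\phi(T^mx)) : m\in\mathbb{Z}^k,\ \phi(T^mx)\neq0\}$, i.e. the set of $u\in\mathbb{R}^{k+1}$ with $|u-(n,1/\phi(T^nx))|\leq|u-(m,1/\phi(T^mx))|$ for all such $m$ ($|\cdot|$ the Euclidean norm); if $\phi(T^nx)=0$ set $V(x,n)=\emptyset$. Choose a real number $H\geq(L+\sqrt{k})^2$ and let $W(x,n)$ be the projection to the first $k$ coordinates of $V(x,n)\cap(\mathbb{R}^k\times\{-H\})$. Then $\mathbb{R}^k=\bigcup_{n\in\mathbb{Z}^k}W(x,n)$. $B_r(\cdot)$ denotes the closed Euclidean ball of radius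 $r$. *)

(* Defs.v *)
From HB Require Import structures.
From mathcomp Require Import all_boot all_order all_algebra.
From mathcomp Require Import all_classical all_reals all_analysis.
Set Implicit Arguments. Unset Strict Implicit. Unset Printing Implicit Defensive.
Import Order.TTheory GRing.Theory Num.Theory.
Import numFieldTopology.Exports numFieldNormedType.Exports.
Local Open Scope classical_set_scope.
Local Open Scope ring_scope.

(* Z^k is 'rV[int]_k, R^k is 'rV[R]_k, R^(k+1) is 'rV[R]_k * R. *)

Definition zvecR {R : realType} {k : nat} (n : 'rV[int]_k) : 'rV[R]_k :=
  map_mx (fun z : int => z%:~R) n.

Definition enorm {R : realType} {k : nat} (v : 'rV[R]_k) : R :=
  Num.sqrt (\sum_(i < k) v ord0 i ^+ 2).

Definition enorm1 {R : realType} {k : nat} (u : 'rV[R]_k * R) : R :=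
  Num.sqrt (\sum_(i < k) u.1 ord0 i ^+ 2 + u.2 ^+ 2).

Definition esub1 {R : realType} {k : nat} (u v : 'rV[R]_k * R) : 'rV[R]_k * R :=
  (u.1 - v.1, u.2 - v.2).

Definition cball {R : realType} {k : nat} (c : 'rV[R]_k) (r : R) : set 'rV[R]_k :=
  [set b | enorm (b - c) <= r].
Definition cball1 {R : realType} {k : nat} (c : 'rV[R]_k * R) (r : R)
  : set ('rV[R]_k * R) := [set u | enorm1 (esub1 u c) <= r].

Definition is_Zk_action {R : realType} {k : nat} {X : metricType R}
  (T : 'rV[int]_k -> X -> X) : Prop :=
  (forall x, T 0 x = x) /\
  (forall m n x, T (m + n) x = T m (T n x)) /\
  (forall n, continuous (T n)).

Definition marker_property {k : nat} {X : topologicalType}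
  (T : 'rV[int]_k -> X -> X) : Prop :=
  forall F : set 'rV[int]_k, finite_set F ->
    exists U : set X, open U /\
      (forall x : X, exists n, (T n @` U) x) /\
      (forall n, F n -> n != 0 -> U `&` (T n @` U) = set0).

Definition admissible {R : realType} {k : nat} {X : metricType R}
  (T : 'rV[int]_k -> X -> X) (M L : nat) (phi : X -> R) (H : R) : Prop :=
  (0 < M)%N /\ (M <= L)%N /\
  continuous phi /\ (forall x, 0 <= phi x <= 1) /\
  (forall x, 0 < phi x -> forall n : 'rV[int]_k, n != 0 ->
      enorm (zvecR n : 'rV[R]_k) < M%:R -> phi (T n x) = 0) /\
  (forall x, exists n : 'rV[int]_k,
      enorm (zvecR n : 'rV[R]_k) < L%:R /\ phi (T n x) = 1) /\
  (L%:R + Num.sqrt (k%:R : R)) ^+ 2 <= H.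

Definition vcenter {R : realType} {k : nat} {X : Type}
  (T : 'rV[int]_k -> X -> X) (phi : X -> R) (x : X) (n : 'rV[int]_k)
  : 'rV[R]_k * R := (zvecR n, (phi (T n x))^-1).

(* Voronoi cell V(x,n); empty when phi(T^n x) = 0 *)
Definition Vcell {R : realType} {k : nat} {X : Type}
  (T : 'rV[int]_k -> X -> X) (phi : X -> R) (x : X) (n : 'rV[int]_k)
  : set ('rV[R]_k * R) :=
  [set u | phi (T n x) != 0 /\
     forall m : 'rV[int]_k, phi (T m x) != 0 ->
       enorm1 (esub1 u (vcenter T phi x n)) <= enorm1 (esub1 u (vcenter T phi x m))].

Definition Wcell {R : realType} {k : nat} {X : Type}
  (T : 'rV[int]_k -> X -> X) (phi : X -> R) (H : R) (x : X) (n : 'rV[int]_k)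
  : set 'rV[R]_k := [set a | Vcell T phi x n (a, - H)].

(* Main.v *)
Require Import Defs.
From HB Require Import structures.
From mathcomp Require Import all_boot all_order all_algebra.
From mathcomp Require Import all_classical all_reals all_analysis.
From mathcomp Require Import ring lra.
Import Order.TTheory GRing.Theory Num.Theory.
Import numFieldTopology.Exports numFieldNormedType.Exports.
Local Open Scope classical_set_scope.
Local Open Scope ring_scope.

Section Help.
Context {R : realType} {k : nat}.

Definition sqs (f : 'I_k -> R) (c : R) := \sum_i f i ^+ 2 + c ^+ 2.
Definition dts (f g : 'I_k -> R) (c d : R) := \sum_i f i * g i + c * d.

Lemma sqs_ge0 f c : 0 <= sqs f c.
Proof. rewrite /sqs; apply: addr_ge0; last exact: sqr_ge0.
by apply: sumr_ge0 => i _; exact: sqr_ge0. Qed.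

Lemma sqs_lin f g c d t :
  sqs (fun i => f i - t * g i) (c - t * d) =
  sqs f c - 2 * t * dts f g c d + t ^+ 2 * sqs g d.
Proof.
rewrite /sqs /dts.
have -> : \sum_i (f i - t * g i) ^+ 2 =
   \sum_i f i ^+ 2 - 2 * t * \sum_i f i * g i + t ^+ 2 * \sum_i g i ^+ 2.
  rewrite !mulr_sumr -sumrB -big_split /=; apply: eq_bigr => i _; ring.
ring.
Qed.

Lemma sqs_add f g c d :
  sqs (fun i => f i + g i) (c + d) = sqs f c + 2 * dts f g c d + sqs g d.
Proof.
rewrite /sqs /dts.
have -> : \sum_i (f i + g i) ^+ 2 =
   \sum_i f i ^+ 2 + 2 * \sum_i f i * g i + \sum_i g i ^+ 2.
  rewrite !mulr_sumr -!big_split /=; apply: eq_bigr => i _; ring.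
ring.
Qed.

Lemma quad_disc (A B D : R) : 0 <= B ->
  (forall t, 0 <= A - 2 * t * D + t ^+ 2 * B) -> D ^+ 2 <= A * B.
Proof.
move=> B0 H.
have [Bp|] := ltrP 0 B.
  have := H (D / B).
  have -> : A - 2 * (D / B) * D + (D / B) ^+ 2 * B = (A * B - D ^+ 2) / B.
    by field; rewrite gt_eqF.
  rewrite pmulr_lge0 ?invr_gt0 // subr_ge0 //.
move=> Ble; have B00 : B = 0 by apply/eqP; rewrite eq_le Ble B0.
rewrite B00 mulr0.
have [D0|] := eqVneq D 0; first by rewrite D0 expr2 mulr0.
move=> Dn; have := H ((A + 1) / (2 * D)).
rewrite B00 mulr0 addr0.
have -> : 2 * ((A + 1) / (2 * D)) * D = A + 1.
  by field.
move=> h; exfalso; lra.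
Qed.

Lemma cs f g c d : dts f g c d <= Num.sqrt (sqs f c) * Num.sqrt (sqs g d).
Proof.
have h : dts f g c d ^+ 2 <= sqs f c * sqs g d.
  apply: quad_disc; first exact: sqs_ge0.
  move=> t; rewrite -sqs_lin; exact: sqs_ge0.
rewrite -sqrtrM ?sqs_ge0 //.
apply: le_trans (ler_norm _) _.
by rewrite -sqrtr_sqr ler_sqrt // mulr_ge0 ?sqs_ge0.
Qed.

Lemma mink f g c d :
  Num.sqrt (sqs (fun i => f i + g i) (c + d)) <=
  Num.sqrt (sqs f c) + Num.sqrt (sqs g d).
Proof.
rewrite -(ger0_norm (addr_ge0 (sqrtr_ge0 (sqs f c)) (sqrtr_ge0 (sqs g d)))).
rewrite -sqrtr_sqr ler_sqrt ?sqr_ge0 // sqs_add sqrrD !sqr_sqrtr ?sqs_ge0 //.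
have := cs f g c d; lra.
Qed.

Lemma sqs_ext f g c d : (forall i, f i = g i) -> c = d -> sqs f c = sqs g d.
Proof. by move=> h ->; rewrite /sqs; congr (_ + _); apply: eq_bigr => i _; rewrite h. Qed.

Lemma sqs_mono f g c d : (forall i, f i ^+ 2 <= g i ^+ 2) -> c ^+ 2 <= d ^+ 2 ->
  sqs f c <= sqs g d.
Proof. by move=> h hc; rewrite /sqs lerD // ler_sum. Qed.

Lemma tri (f g h : 'I_k -> R) c d e : (forall i, h i = f i + g i) -> e = c + d ->
  Num.sqrt (sqs h e) <= Num.sqrt (sqs f c) + Num.sqrt (sqs g d).
Proof. by move=> hh he; rewrite (@sqs_ext h (fun i => f i + g i) e (c + d) hh he) mink. Qed.

Lemma sqs_opp f c : sqs (fun i => - f i) (- c) = sqs f c.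
Proof. by rewrite /sqs sqrrN; congr (_ + _); apply: eq_bigr => i _; rewrite sqrrN. Qed.

Lemma aff (f g h al be : 'I_k -> R) c d e al0 be0 mu :
  (forall i, h i = mu * f i + (1 - mu) * g i) -> e = mu * c + (1 - mu) * d ->
  sqs (fun i => h i - al i) (e - al0) - sqs (fun i => h i - be i) (e - be0) =
  mu * (sqs (fun i => f i - al i) (c - al0) - sqs (fun i => f i - be i) (c - be0))
  + (1 - mu) * (sqs (fun i => g i - al i) (d - al0) - sqs (fun i => g i - be i) (d - be0)).
Proof.
move=> hh he; rewrite /sqs he.
have E : \sum_i (h i - al i) ^+ 2 - \sum_i (h i - be i) ^+ 2 =
  mu * (\sum_i (f i - al i) ^+ 2 - \sum_i (f i - be i) ^+ 2) +
  (1 - mu) * (\sum_i (g i - al i) ^+ 2 - \sum_i (g i - be i) ^+ 2).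
  rewrite -!sumrB !mulr_sumr -big_split /=; apply: eq_bigr => i _; rewrite hh; ring.
move: E; set A := \sum_i _; set B := \sum_i _; set C := \sum_i _;
  set D := \sum_i _; set E := \sum_i _; set F := \sum_i _ => E0.
have -> : A + (mu * c + (1 - mu) * d - al0) ^+ 2 - (B + (mu * c + (1 - mu) * d - be0) ^+ 2)
  = (A - B) + ((mu * c + (1 - mu) * d - al0) ^+ 2 - (mu * c + (1 - mu) * d - be0) ^+ 2) by ring.
rewrite E0; ring.
Qed.

End Help.

Definition e1E (R : realType) (k : nat) (u v : 'rV[R]_k * R) :
  enorm1 (esub1 u v) = Num.sqrt (sqs (fun i => u.1 ord0 i - v.1 ord0 i) (u.2 - v.2)).
Proof. by rewrite /enorm1 /sqs; apply: f_equal; congr (_ + _); apply: eq_bigr => i _; rewrite !mxE. Qed.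

Lemma eE (R : realType) (k : nat) (u v : 'rV[R]_k) :
  enorm (u - v) = Num.sqrt (sqs (fun i => u ord0 i - v ord0 i) 0).
Proof.
rewrite /enorm /sqs expr2 mulr0 addr0; apply: f_equal.
by apply: eq_bigr => i _; rewrite !mxE.
Qed.

Lemma eE0 (R : realType) (k : nat) (u : 'rV[R]_k) :
  enorm u = Num.sqrt (sqs (fun i => u ord0 i) 0).
Proof. by rewrite /enorm /sqs expr2 mulr0 addr0. Qed.

Lemma zvecRE (R : realType) (k : nat) (n : 'rV[int]_k) i :
  (zvecR n : 'rV[R]_k) ord0 i = (n ord0 i)%:~R.
Proof. by rewrite mxE. Qed.

Lemma part1 (R : realType) (k : nat) (X : Type) (T : 'rV[int]_k -> X -> X)
  (phi : X -> R) (M : nat) :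
  (forall m n x, T (m + n) x = T m (T n x)) ->
  (forall x, 0 < phi x -> forall n : 'rV[int]_k, n != 0 ->
      enorm (zvecR n : 'rV[R]_k) < M%:R -> phi (T n x) = 0) ->
  forall x n, 0 < phi (T n x) ->
        cball1 (vcenter T phi x n) (M%:R / 2) `<=` Vcell T phi x n.
Proof.
move=> hact hsep x n hp u hu; split; first by rewrite gt_eqF.
move=> m hm; case: (eqVneq m n) => [->|mn]; first by [].
have hM : M%:R <= enorm (zvecR (m - n) : 'rV[R]_k).
  rewrite leNgt; apply/negP => hlt.
  have := hsep _ hp (m - n); rewrite subr_eq0 mn -hact subrK => /(_ isT hlt) h0.
  by rewrite h0 eqxx in hm.
move: hu; rewrite /cball1 /= => hu.
have h1 : enorm (zvecR (m - n) : 'rV[R]_k) <=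
   enorm1 (esub1 u (vcenter T phi x n)) + enorm1 (esub1 u (vcenter T phi x m)).
  rewrite eE0 !e1E.
  set cn := vcenter T phi x n; set cm := vcenter T phi x m.
  rewrite -[X in _ <= _ + Num.sqrt X]sqs_opp.
  apply: le_trans (@tri R k (fun i => u.1 ord0 i - cn.1 ord0 i)
     (fun i => - (u.1 ord0 i - cm.1 ord0 i)) (fun i => cm.1 ord0 i - cn.1 ord0 i)
     (u.2 - cn.2) (- (u.2 - cm.2)) (cm.2 - cn.2) _ _).
  - rewrite ler_sqrt ?sqs_ge0 //.
    apply: sqs_mono.
    + by move=> i; rewrite /cm /cn /= !zvecRE !mxE intrB.
    + by rewrite expr2 mulr0 sqr_ge0.
  - by move=> i /=; ring.
  - by ring.
have := hu; lra.
Qed.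

Lemma part23 (R : realType) (k : nat) (X : Type) (T : 'rV[int]_k -> X -> X)
  (phi : X -> R) (L : nat) (H : R) :
  (forall m n x, T (m + n) x = T m (T n x)) ->
  (forall x, 0 <= phi x <= 1) ->
  (forall x, exists n : 'rV[int]_k,
      enorm (zvecR n : 'rV[R]_k) < L%:R /\ phi (T n x) = 1) ->
  (L%:R + Num.sqrt (k%:R : R)) ^+ 2 <= H ->
  forall x n (a : 'rV[R]_k), Vcell T phi x n (a, - H) ->
   (1 <= (phi (T n x))^-1 <= 2) /\ enorm (a - zvecR n) < L%:R + Num.sqrt (k%:R : R).
Proof.
move=> hact h01 hcov hH x n a [hn hV].
pose m0 : 'rV[int]_k := \row_(i < k) Num.floor (a ord0 i).
have [j [hj hj1]] := hcov (T m0 x).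
rewrite -hact in hj1.
have hm1 : phi (T (j + m0) x) != 0 by rewrite hj1 oner_neq0.
have := hV _ hm1 => {hV}.
set m := j + m0.
rewrite !e1E /= hj1 invr1 ler_sqrt ?sqs_ge0 //.
set Sn := sqs _ _; set Sm := sqs _ _.
have hSm : Num.sqrt (sqs (fun i => a ord0 i - (zvecR m : 'rV[R]_k) ord0 i) 0)
     < L%:R + Num.sqrt (k%:R : R).
  apply: le_lt_trans (@tri R k (fun i => a ord0 i - (m0 ord0 i)%:~R)
     (fun i => - (zvecR j : 'rV[R]_k) ord0 i) _ 0 (- 0) 0 _ _) _.
  - by move=> i; rewrite /m !zvecRE mxE intrD; ring.
  - by rewrite oppr0 addr0.
  rewrite sqs_opp -eE0 addrC ltr_leD //.
  rewrite ler_sqrt // /sqs expr2 mulr0 addr0.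
  rewrite -[k in k%:R]card_ord -sumr_const.
  apply: ler_sum => i _; rewrite /m0 mxE.
  have := floor_itv (a ord0 i); rewrite intrD => /andP [h1 h2].
  set y := a ord0 i - _; have : 0 <= y < 1 by apply/andP; split; rewrite /y; lra.
  by move=> /andP [y0 y1]; nra.
have Smdef : Sm = \sum_i (a ord0 i - (zvecR m : 'rV[R]_k) ord0 i) ^+ 2 + (- H - 1) ^+ 2 by [].
have Sndef : Sn = \sum_i (a ord0 i - (zvecR n : 'rV[R]_k) ord0 i) ^+ 2
     + (- H - (phi (T n x))^-1) ^+ 2 by [].
have hSm2 : \sum_i (a ord0 i - (zvecR m : 'rV[R]_k) ord0 i) ^+ 2 < H.
  apply: lt_le_trans hH.
  move: hSm; rewrite /sqs expr2 mulr0 addr0.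
  set Q := \sum_i _ => hQ.
  have Q0 : 0 <= Q by apply: sumr_ge0 => i _; apply: sqr_ge0.
  rewrite -(sqr_sqrtr Q0).
  have := sqrtr_ge0 Q; nra.
have ht : 1 <= (phi (T n x))^-1.
  have /andP [p0 p1] := h01 (T n x).
  by rewrite invf_ge1 // lt_def hn.
have H0 : 0 <= H by apply: le_trans hH; apply: sqr_ge0.
set Pn := \sum_i (a ord0 i - (zvecR n : 'rV[R]_k) ord0 i) ^+ 2 in Sndef.
have Pn0 : 0 <= Pn by apply: sumr_ge0 => i _; apply: sqr_ge0.
move: hSm2; set Pm := \sum_i _ => hSm2.
rewrite Smdef Sndef => hle.
set t := (phi (T n x))^-1 in ht hle *.
split.
  rewrite ht /= leNgt; apply/negP => t2.
  have : 0 < (t - 2) * (2 * H + t + 1) by apply: mulr_gt0; lra.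
  have e1 : (- H - t) ^+ 2 = H * H + 2 * (H * t) + t * t by ring.
  have e2 : (- H - 1) ^+ 2 = H * H + 2 * H + 1 by ring.
  have e3 : (t - 2) * (2 * H + t + 1) = 2 * (H * t) + t * t - t - 4 * H - 2 by ring.
  rewrite e3; rewrite e1 e2 in hle.
  have hle2 : Pn + (H * H + 2 * (H * t) + t * t) <= Pm + (H * H + 2 * H + 1) by exact: hle.
  lra.
rewrite eE; apply: (@le_lt_trans _ _ (Num.sqrt (sqs (fun i => a ord0 i - (zvecR m : 'rV[R]_k) ord0 i) 0))) => //.
rewrite ler_sqrt ?sqs_ge0 // /sqs expr2 mulr0 addr0.
have hle2 : Pn + (- H - t) ^+ 2 <= Pm + (- H - 1) ^+ 2 by exact: hle.
have e0 : (- H - t) ^+ 2 - (- H - 1) ^+ 2 = (t - 1) * (2 * H + t + 1) by ring.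
have : 0 <= (t - 1) * (2 * H + t + 1) by apply: mulr_ge0; lra.
rewrite -e0 => h3.
rewrite addr0; suff hh : Pn <= Pm by exact: hh.
lra.
Qed.

Arguments part1 {R k X T phi M}.
Arguments part23 {R k X T phi L H}.

Theorem lemma4p1 (R : realType) (k : nat) :
  (* parts (1)-(3) *)
  (forall (X : metricType R) (T : 'rV[int]_k -> X -> X),
     compact [set: X] -> is_Zk_action T -> marker_property T ->
   forall (M L : nat) (phi : X -> R) (H : R), admissible T M L phi H ->
   forall (x : X) (n : 'rV[int]_k) (a : 'rV[R]_k),
     (0 < phi (T n x) ->
        cball1 (vcenter T phi x n) (M%:R / 2) `<=` Vcell T phi x n) /\
     (Wcell T phi H x n !=set0 ->
        1 <= (phi (T n x))^-1 <= 2) /\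
     (Vcell T phi x n (a, - H) ->
        enorm (a - zvecR n) < L%:R + Num.sqrt (k%:R : R))) /\
  (* part (4) *)
  (forall s r : R, 1 < s -> 0 < r ->
   exists M0 : nat,
   forall (X : metricType R) (T : 'rV[int]_k -> X -> X),
     compact [set: X] -> is_Zk_action T -> marker_property T ->
   forall (M L : nat) (phi : X -> R) (H : R), (M0 <= M)%N ->
     admissible T M L phi H ->
   forall (x : X) (n : 'rV[int]_k) (a : 'rV[R]_k),
     Vcell T phi x n (a, - (s * H)) ->
     cball (s^-1 *: a + (1 - s^-1) *: zvecR n) r `<=` Wcell T phi H x n).
Proof.
split.
  move=> X T _ [_ [hact _]] _ M L phi H [_ [_ [_ [h01 [hsep [hcov hH]]]]]] x n a.
  split; first exact: part1.
  split.
    move=> [a' ha']; have := part23 hact h01 hcov hH x n a' ha'. by case.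
  by move=> hv; exact: (part23 hact h01 hcov hH _ _ _ hv).2.
move=> s r s1 r0.
have s0 : 0 < s by lra.
set lam := 1 - s^-1.
have lam0 : 0 < lam by rewrite /lam subr_gt0 invf_lt1.
have lam1 : lam <= 1 by rewrite /lam gerDl oppr_le0 invr_ge0 ltW.
exists (Num.trunc (2 * (r + 2) / lam)).+1.
move=> X T _ [_ [hact _]] _ M L phi H hM [_ [_ [_ [h01 [hsep [hcov hH]]]]]] x n a hV b hb.
have hMr : 2 * (r + 2) / lam < M%:R.
  apply: lt_le_trans (truncnS_gt _) _; by rewrite ler_nat.
have H0 : 0 <= H by apply: le_trans hH; apply: sqr_ge0.
have hsH : (L%:R + Num.sqrt (k%:R : R)) ^+ 2 <= s * H.
  apply: le_trans hH _; rewrite -subr_ge0 -{2}(mul1r H) -mulrBl; apply: mulr_ge0; lra.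
have [/andP [t1 t2] _] := part23 hact h01 hcov hsH _ _ _ hV.
have hp : 0 < phi (T n x).
  by have /andP [p0 _] := h01 (T n x); rewrite lt_def (proj1 hV) p0.
set p0 := s^-1 *: a + lam *: (zvecR n : 'rV[R]_k) in hb *.
pose z : 'rV[R]_k * R :=
  (\row_i ((n ord0 i)%:~R + (b ord0 i - p0 ord0 i) / lam), 0).
have hz : Vcell T phi x n z.
  apply: (part1 hact hsep _ _ hp); rewrite /cball1 /= e1E.
  set t := (phi (T n x))^-1 in t1 t2 *.
  move: hb; rewrite /cball /= eE.
  set E := sqs _ 0 => hE.
  have E0 : 0 <= E by apply: sqs_ge0.
  have hE2 : E <= r ^+ 2 by rewrite -(sqr_sqrtr E0); have := sqrtr_ge0 E; nra.
  have -> : sqs (fun i => z.1 ord0 i - (vcenter T phi x n).1 ord0 i)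
       (z.2 - (vcenter T phi x n).2) = lam^-1 ^+ 2 * E + t ^+ 2.
    rewrite /E /sqs [0 ^+ 2]expr2 mulr0 addr0 mulr_sumr /=; congr (_ + _).
      by apply: eq_bigr => i _; rewrite !mxE; ring.
    by rewrite /t; ring.
  set mu := lam^-1.
  have mu1 : 1 <= mu by rewrite /mu invf_ge1.
  have hMr2 : mu * (r + 2) <= M%:R / 2.
    move: hMr; rewrite /mu; move=> h; have : 0 < lam by []; move=> _.
    have e : 2 * (r + 2) / lam = 2 * (lam^-1 * (r + 2)) by ring.
    rewrite e in h; lra.
  have hq : (mu * (r + 2)) ^+ 2 <= (M%:R / 2) ^+ 2.
    have a0 : 0 <= mu * (r + 2) by apply: mulr_ge0; lra.
    nra.
  have : mu ^+ 2 * E + t ^+ 2 <= (M%:R / 2) ^+ 2.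
    apply: le_trans hq.
    have : mu ^+ 2 * E <= mu ^+ 2 * r ^+ 2 by apply: ler_wpM2l => //; apply: sqr_ge0.
    nra.
  move=> h; rewrite -(@ger0_norm _ (M%:R / 2)); last by apply: le_trans hMr2; apply: mulr_ge0; lra.
  rewrite -sqrtr_sqr ler_sqrt //; apply: sqr_ge0.
rewrite /Wcell /=.
split; first exact: (proj1 hV).
move=> m hm.
have hq := (proj2 hV) m hm; have hzm := (proj2 hz) m hm.
move: hq hzm; rewrite !e1E !ler_sqrt ?sqs_ge0 // => hq hzm.
rewrite -subr_ge0.
rewrite (@aff R k (fun i => a ord0 i) (fun i => z.1 ord0 i) (fun i => (b, - H).1 ord0 i)
   (fun i => (vcenter T phi x m).1 ord0 i) (fun i => (vcenter T phi x n).1 ord0 i)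
   (- (s * H)) 0 (b, - H).2 (vcenter T phi x m).2 (vcenter T phi x n).2 s^-1).
- apply: addr_ge0; apply: mulr_ge0.
  + by rewrite invr_ge0 ltW.
  + by rewrite subr_ge0.
  + exact: ltW.
  + by rewrite subr_ge0.
- move=> i /=.
  rewrite !mxE -/lam; field; by rewrite !gt_eqF.
- rewrite /=; field; by rewrite gt_eqF.
Qed.
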